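(* Let $V$ be a $1$-dimensional topological manifold (not necessarily Hausdorff) which is simply connected and has a countable basis. Then there exists a continuous function $f:V\to\mathbb{R}$ which is a local homeomorphism (every point of $V$ has an open neighborhood mapped homeomorphically by $f$ onto an open subset of $\mathbb{R}$).
   Context: A topological manifold of dimension $n$ is a topological space in which every point has an open neighborhood homeomorphic to $\mathbb{R}^n$; the Hausdorff axiom is not assumed. A covering of a space $V$ is a pair $(\widetilde V,p)$ with $p:\widetilde V\to V$ continuous such that every point of $V$ has an open neighborhood $U$ for which $p^{-1}(U)$ is partitioned into open sets each mapped homeomorphically onto $U$ by $p$. A space $V$ is simply connected if it is connected and for every connected covering $(\widetilde V,p)$ of $V$, the map $p$ is a homeomorphism. *)

(* Defs.v *)
From mathcomp Require Import all_boot all_order all_algebra.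
From mathcomp Require Import all_classical all_reals topology normedtype.
Set Implicit Arguments. Unset Strict Implicit. Unset Printing Implicit Defensive.
Import Order.TTheory GRing.Theory Num.Theory.
Import numFieldNormedType.Exports.
Local Open Scope classical_set_scope.

Definition homeo_onto {X Y : topologicalType} (A : set X) (B : set Y)
  (f : X -> Y) : Prop :=
  exists g : Y -> X,
    [/\ (forall x, A x -> B (f x)),
        (forall y, B y -> A (g y)),
        (forall x, A x -> g (f x) = x) &
        (forall y, B y -> f (g y) = y)] /\
    ({within A, continuous f} /\ {within B, continuous g}).

(* topological manifold of dimension 1 (no Hausdorff axiom):
   every point has an open neighborhood homeomorphic to R *)
Definition manifold1 (R : realType) (V : topologicalType) : Prop :=
  forall x : V, exists U : set V,
    [/\ open U, U x & exists phi : V -> R, homeo_onto U [set: R] phi].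

Definition connected_space (X : topologicalType) : Prop :=
  [set: X] !=set0 /\ connected [set: X].

Definition is_covering {W V : topologicalType} (p : W -> V) : Prop :=
  continuous p /\
  forall x : V, exists U : set V, [/\ open U, U x &
    exists (I : Type) (S : I -> set W),
      [/\ (forall i, open (S i)),
          (forall i j, i <> j -> S i `&` S j = set0),
          \bigcup_i S i = p @^-1` U &
          (forall i, homeo_onto (S i) U p)]].

Definition simply_connected (V : topologicalType) : Prop :=
  connected_space V /\
  forall (W : topologicalType) (p : W -> V),
    connected_space W -> is_covering p -> homeo_onto [set: W] [set: V] p.

Definition local_homeo {X Y : topologicalType} (f : X -> Y) : Prop :=
  forall x : X, exists U : set X,
    [/\ open U, U x, open (f @` U) & homeo_onto U (f @` U) f].

(* Main.v *)
Require Import Defs.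
From mathcomp Require Import all_boot all_order all_algebra.
From mathcomp Require Import all_classical all_reals topology normedtype.
Import numFieldNormedType.Exports.
Local Open Scope classical_set_scope.

From HB Require Import structures.
From mathcomp Require Import all_boot all_order all_algebra.
From mathcomp Require Import all_classical all_reals topology normedtype.
Set Implicit Arguments. Unset Strict Implicit. Unset Printing Implicit Defensive.
Import Order.TTheory GRing.Theory Num.Theory.
Import numFieldNormedType.Exports.
Local Open Scope classical_set_scope.

Definition germ {V : topologicalType} {R : Type} (g : V -> R) (y : V) : set (V -> R) :=
  [set h | exists N, [/\ open N, N y & forall z, N z -> h z = g z]].

Definition etale (V : topologicalType) (R : Type) (good : (V -> R) -> V -> Prop) : Type :=
  (V * set (V -> R))%type.

Section Etale.
Variables (V : topologicalType) (R : Type) (good : (V -> R) -> V -> Prop).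
Local Notation W := (etale good).
HB.instance Definition _ := gen_eqMixin W.
HB.instance Definition _ := gen_choiceMixin W.

Definition eopen (O : set W) : Prop :=
  forall y E, O (y, E) -> forall g, E = germ g y -> good g y ->
    exists N, [/\ open N, N y & forall z, N z -> O (z, germ g z)].

Lemma eopT : eopen setT.
Proof. by move=> y E _ g _ _; exists setT; split => //; exact: openT. Qed.

Lemma eopI : setI_closed eopen.
Proof.
move=> A B oA oB y E [Ay By] g Eg gg.
have [N1 [o1 N1y h1]] := oA _ _ Ay _ Eg gg.
have [N2 [o2 N2y h2]] := oB _ _ By _ Eg gg.
exists (N1 `&` N2); split => //; first exact: openI.
by move=> z [] /h1 ? /h2.
Qed.

Lemma eop_bigU (I : Type) (f : I -> set W) :
  (forall i, eopen (f i)) -> eopen (\bigcup_i f i).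
Proof.
move=> fo y E [i _ fi] g Eg gg.
have [N [oN Ny h]] := fo i _ _ fi _ Eg gg.
by exists N; split => // z /h ?; exists i.
Qed.

HB.instance Definition _ := isOpenTopological.Build W eopT eopI eop_bigU.

Lemma etale_openE (O : set W) : open O = eopen O.
Proof. by []. Qed.

End Etale.

From HB Require Import structures.
From mathcomp Require Import all_boot all_order all_algebra.
From mathcomp Require Import all_classical all_reals topology normedtype realfun.
From mathcomp Require Import lra.
Set Implicit Arguments. Unset Strict Implicit. Unset Printing Implicit Defensive.
Import Order.TTheory GRing.Theory Num.Theory.
Import numFieldNormedType.Exports.
Local Open Scope classical_set_scope.
Local Open Scope ring_scope.

Unset Implicit Arguments.
Section Main.
Variables (R : realType) (V : topologicalType).
Variables (U : nat -> set V) (phi : nat -> V -> R) (chi : nat -> R -> V).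
Hypothesis oU : forall k, open (U k).
Hypothesis Uchi : forall k t, U k (chi k t).
Hypothesis phichi : forall k t, phi k (chi k t) = t.
Hypothesis chiphi : forall k x, U k x -> chi k (phi k x) = x.
Hypothesis cphi : forall k, {within U k, continuous (phi k)}.
Hypothesis cchi : forall k, continuous (chi k).

Lemma chart_nbhs k (N : set V) y : open N -> N y -> U k y ->
  exists2 d : R, 0 < d & forall s, `|phi k y - s| < d -> N (chi k s).
Proof.
move=> oN Ny Uy.
have : nbhs (phi k y) (chi k @^-1` N).
  have := cchi k (phi k y) => H; apply: H; rewrite chiphi //.
  by apply: open_nbhs_nbhs; split.
move/nbhs_ballP => [d d0 H]; exists d => // s hs; apply: H.
Qed.

Lemma cphi_at k x : U k x -> {for x, continuous (phi k)}.
Proof.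
move=> Ux; have := cphi k; rewrite continuous_open_subspace //.
by move=> /(_ x); apply; rewrite inE.
Qed.


Definition J k s t := [set z | U k z /\ s < phi k z < t].

Lemma T_cont_at j k s : U j (chi k s) -> {for s, continuous (fun s => phi j (chi k s))}.
Proof.
move=> h; apply: (@continuous_comp _ _ _ (chi k) (phi j)); first exact: cchi.
exact: cphi_at.
Qed.

Lemma minmax_absurd (a b lo hi : R) : Num.min a b = lo -> Num.max a b = hi ->
  lo < a -> a < hi -> False.
Proof.
case: (leP a b) => h; first by move=> <- _; rewrite ltxx.
by move=> _ <- _; rewrite ltxx.
Qed.

Lemma minmax_absurd' (a b lo hi : R) : Num.min a b = lo -> Num.max a b = hi ->
  lo < b -> b < hi -> False.
Proof. by rewrite minC maxC; exact: minmax_absurd. Qed.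

Lemma Jeq_gen j k s t lo hi : s < t ->
  (forall u, s <= u <= t -> U j (chi k u)) ->
  (forall u, s < u < t -> lo < phi j (chi k u) < hi) ->
  Num.min (phi j (chi k s)) (phi j (chi k t)) = lo ->
  Num.max (phi j (chi k s)) (phi j (chi k t)) = hi ->
  J k s t = J j lo hi.
Proof.
move=> st hU hT hmin hmax; apply/seteqP; split => z.
  move=> [Uz /andP[sz zt]].
  have ez : chi k (phi k z) = z by rewrite chiphi.
  split; first by rewrite -ez; apply: hU; apply/andP; split; apply: ltW.
  by rewrite -ez; apply: hT; apply/andP.
move=> [Uz /andP[lz zh]].
have [u uin Tu] : exists2 u, u \in `[s, t] & phi j (chi k u) = phi j z.
  apply: (@IVT _ (fun u => phi j (chi k u))); first exact: ltW.
    apply: continuous_in_subspaceT => u; rewrite inE /= in_itv /= => /andP[h1 h2].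
    by apply: T_cont_at; apply: hU; apply/andP.
  by rewrite hmin hmax; apply/andP; split; apply: ltW.
move: uin; rewrite in_itv /= => /andP[su ut].
have zu : z = chi k u.
  by rewrite -(chiphi j z) // -Tu chiphi //; apply: hU; apply/andP.
have ss : u != s.
  apply/eqP => us; apply: (minmax_absurd _ _ _ _ hmin hmax); by rewrite us in Tu; rewrite Tu.
have tt : u != t.
  apply/eqP => us; apply: (minmax_absurd' _ _ _ _ hmin hmax); by rewrite us in Tu; rewrite Tu.
split; first by rewrite zu.
rewrite zu phichi; apply/andP; split; rewrite lt_neqAle ?su ?ut ?andbT //.
  by rewrite eq_sym.
Qed.

Variables (m : set V -> R) (Fr : nat -> R -> R).
Hypothesis Fr_cont : forall k, continuous (Fr k).
Hypothesis Fr_lt : forall k s t, s < t -> Fr k s < Fr k t.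
Hypothesis Fr_J : forall k s t, s < t -> Fr k t - Fr k s = m (J k s t).

Definition sg (e : bool) (x : R) := if e then x else - x.
Definition F k z := Fr k (phi k z).

Lemma compat j k y : U j y -> U k y -> exists N, [/\ open N, N y, N `<=` U k &
  exists e c, forall z, N z -> F j z = sg e (F k z) + c].
Proof.
move=> Ujy Uky; set a := phi k y.
have [d d0 hd] := chart_nbhs k (U j) y (oU j) Ujy Uky.
set T := fun s => phi j (chi k s).
have hI : forall s, s \in `]a - d, a + d[ -> U j (chi k s).
  by move=> s; rewrite in_itv /= => hs; apply: hd; rewrite ltr_distlC.
have hmono : unstable.strict_monotonic `]a - d, a + d[ T.
  apply: itv_continuous_inj_mono.
    apply: continuous_in_subspaceT => s; rewrite inE /= => hs.
    by apply: T_cont_at; apply: hI.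
  move=> s1 s2 h1 h2 e.
  have := congr1 (chi j) e; rewrite /T !chiphi; try exact: hI.
  by move/(congr1 (phi k)); rewrite !phichi.
have conv : forall s t u, s \in `]a - d, a + d[ -> t \in `]a - d, a + d[ ->
    s <= u <= t -> u \in `]a - d, a + d[.
  move=> s t u; rewrite !in_itv /= => /andP[? ?] /andP[? ?] /andP[? ?].
  apply/andP; split; lra.
pose N := U k `&` phi k @^-1` ball a d.
have oN : open N.
  have := (@continuous_inP _ _ (U k) (phi k) (oU k)).1; apply.
    by move=> x; rewrite inE => Ux; apply: cphi_at.
  exact: ball_open.
have Na : forall z, N z -> phi k z \in `]a - d, a + d[.
  by move=> z [_ hz]; rewrite in_itv /=; move: hz; rewrite /ball /= ltr_distlC.
exists N; split => //; first by split => //; exact: ballxx.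
  by move=> z [].
case: hmono => [hinc|hdec].
- have key : forall s t, s \in `]a - d, a + d[ -> t \in `]a - d, a + d[ -> s < t ->
      Fr j (T t) - Fr j (T s) = Fr k t - Fr k s.
    move=> s t hs ht st; have Tst : T s < T t by apply: hinc.
    rewrite Fr_J // Fr_J //; congr m; symmetry.
    apply: Jeq_gen => //.
    + by move=> u hu; apply: hI; apply: conv hu.
    + move=> u /andP[su ut].
      have hu : u \in `]a - d, a + d[.
        by apply: (conv s t) => //; apply/andP; split; apply: ltW.
      by apply/andP; split; apply: hinc.
    + by move: Tst; rewrite /T; case: leP => // h; rewrite ltNge h.
    + by move: Tst; rewrite /T; case: leP => // h; rewrite ltNge h.
  exists true; exists (Fr j (T a) - Fr k a) => z Nz /=.
  have ha : a \in `]a - d, a + d[ by rewrite in_itv /=; apply/andP; split; lra.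
  have ez : z = chi k (phi k z) by rewrite chiphi //; case: Nz.
  rewrite /F {1}ez -/(T (phi k z)).
  have hz := Na z Nz.
  case: (ltgtP (phi k z) a) => h.
  + have := key _ _ hz ha h; lra.
  + have := key _ _ ha hz h; lra.
  + rewrite h; lra.
- have key : forall s t, s \in `]a - d, a + d[ -> t \in `]a - d, a + d[ -> s < t ->
      Fr j (T s) - Fr j (T t) = Fr k t - Fr k s.
    move=> s t hs ht st; have Tst : T t < T s by apply: hdec.
    rewrite Fr_J // Fr_J //; congr m; symmetry.
    apply: Jeq_gen => //.
    + by move=> u hu; apply: hI; apply: conv hu.
    + move=> u /andP[su ut].
      have hu : u \in `]a - d, a + d[.
        by apply: (conv s t) => //; apply/andP; split; apply: ltW.
      by apply/andP; split; apply: hdec.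
    + by move: Tst; rewrite /T; case: leP => // h; rewrite ltNge h.
    + by move: Tst; rewrite /T; case: leP => // h; rewrite ltNge h.
  exists false; exists (Fr j (T a) + Fr k a) => z Nz /=.
  have ha : a \in `]a - d, a + d[ by rewrite in_itv /=; apply/andP; split; lra.
  have ez : z = chi k (phi k z) by rewrite chiphi //; case: Nz.
  rewrite /F {1}ez -/(T (phi k z)).
  have hz := Na z Nz.
  case: (ltgtP (phi k z) a) => h.
  + have := key _ _ hz ha h; lra.
  + have := key _ _ ha hz h; lra.
  + rewrite h; lra.
Qed.


Definition good (g : V -> R) (y : V) := exists k, U k y /\ exists N, [/\ open N, N y, N `<=` U k &
  exists e c, forall z, N z -> g z = sg e (F k z) + c].

Local Notation W0 := (etale good).

Lemma germ_refl (g : V -> R) y : germ g y g.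
Proof. by exists setT; split => //; exact: openT. Qed.

Lemma germ_eq (g h : V -> R) y : (exists N, [/\ open N, N y & forall z, N z -> h z = g z]) ->
  germ h y = germ g y.
Proof.
move=> [N [oN Ny hN]]; apply/seteqP; split => f [N1 [o1 N1y h1]].
  exists (N `&` N1); split => //; first exact: openI.
  by move=> z [Nz N1z]; rewrite h1 // hN.
exists (N `&` N1); split => //; first exact: openI.
by move=> z [Nz N1z]; rewrite h1 // hN.
Qed.

Lemma germ_inv (g h : V -> R) y : germ g y = germ h y ->
  exists N, [/\ open N, N y & forall z, N z -> h z = g z].
Proof. by move=> e; have := germ_refl h y; rewrite -e. Qed.

Lemma germ_near (g h : V -> R) (N : set V) : open N -> (forall z, N z -> h z = g z) ->
  forall z, N z -> germ h z = germ g z.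
Proof. by move=> oN hN z Nz; apply: germ_eq; exists N. Qed.

Lemma good_open g y : good g y -> exists N, [/\ open N, N y & forall z, N z -> good g z].
Proof.
move=> [k [Uky [N [oN Ny NU [e [c hc]]]]]]; exists N; split => // z Nz.
by exists k; split; [exact: NU | exists N; split => //; exists e, c].
Qed.

Definition valid (w : W0) := exists g, w.2 = germ g w.1 /\ good g w.1.

Lemma sheet_open (g : V -> R) (O : set V) : open O ->
  open [set w : W0 | O w.1 /\ w.2 = germ g w.1].
Proof.
move=> oO; rewrite etale_openE => y E /= [Oy ->] h Eh hh.
have [N1 [o1 N1y h1]] := germ_inv _ _ _ Eh.
exists (O `&` N1); split => //; first exact: openI.
move=> z [Oz N1z] /=; split => //; exact: (germ_near _ _ _ o1 h1).
Qed.

Lemma valid_open : open valid.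
Proof.
rewrite etale_openE => y E _ h Eh hh.
have [N [oN Ny hN]] := good_open _ _ hh.
by exists N; split => // z Nz; exists h; split => //; apply: hN.
Qed.

Lemma invalid_open : open (~` valid).
Proof. by rewrite etale_openE => y E nv h Eh hh; exfalso; apply: nv; exists h. Qed.

Lemma fst_cont : continuous (fst : W0 -> V).
Proof.
apply/continuousP => A oA; rewrite etale_openE => y E Ay g _ _.
by exists A; split.
Qed.

Lemma sec_cont (g : V -> R) y : good g y ->
  {for y, continuous (fun z => ((z, germ g z) : W0))}.
Proof.
move=> gy B; rewrite nbhsE => -[O [oO Oy] OB].
move: oO; rewrite etale_openE => /(_ _ _ Oy g erefl gy) [N [oN Ny hN]].
rewrite nbhsE; exists N; first by split.
by move=> z /hN /OB.
Qed.


Hypothesis cover : forall x, exists k, U k x.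
Variable v0 : V.

Definition k0 := xget 0%N [set k | U k v0].
Lemma Uk0 : U k0 v0.
Proof. by rewrite /k0; case: xgetP => // /(_ _) h; have [k hk] := cover v0; exfalso; apply: (h k). Qed.

Definition w0 : W0 := (v0, germ (F k0) v0).

Lemma good_chart k ec z : U k z -> good (fun z => sg ec.1 (F k z) + ec.2) z.
Proof.
by move=> Uz; exists k; split => //; exists (U k); split => //; exists ec.1, ec.2.
Qed.

Lemma valid_w0 : valid w0.
Proof.
exists (F k0); split => //.
have := good_chart k0 (true, 0) v0 Uk0; rewrite /good /=.
move=> [k [Uk [N [oN Ny NU [e [c hc]]]]]]; exists k; split => //; exists N; split => //.
by exists e, c => z Nz; rewrite -hc // addr0.
Qed.

Definition C := connected_component [set: W0] w0.

Lemma C_w0 : C w0.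
Proof. exact: connected_component_refl. Qed.

Lemma C_conn : connected C.
Proof. exact: component_connected. Qed.

Lemma C_valid : C `<=` valid.
Proof.
have h := C_conn (C `&` valid).
have e : C `&` valid = C.
  apply: h.
  - by exists w0; split; [exact: C_w0 | exact: valid_w0].
  - by exists valid => //; exact: valid_open.
  - exists valid => //; rewrite -[valid]setCK; apply: open_closedC; exact: invalid_open.
by move=> w Cw; have := Cw; rewrite -e => -[].
Qed.

Lemma C_max (S : set W0) : connected S -> (exists w, S w /\ C w) -> S `<=` C.
Proof.
move=> cS [w [Sw Cw]]; rewrite /C (same_connected_component Cw).
by apply: connected_component_max.
Qed.

Lemma Uk_connected k : connected (U k).
Proof.
have -> : U k = chi k @` setT.
  apply/seteqP; split => z; first by move=> Uz; exists (phi k z) => //; rewrite chiphi.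
  by move=> [t _ <-].
apply: connected_continuous_connected; last exact: continuous_subspaceT.
by apply/connected_intervalP => x y _ _ z _.
Qed.

Lemma sheet_in_C g (O : set V) : connected O -> (forall z, O z -> good g z) ->
  (exists z, O z /\ C (z, germ g z)) -> forall z, O z -> C (z, germ g z).
Proof.
move=> cO gO [z0 [Oz0 Cz0]] z Oz.
have : ((fun z => ((z, germ g z) : W0)) @` O) `<=` C.
  apply: C_max; last by exists (z0, germ g z0); split => //; exists z0.
  apply: connected_continuous_connected => //.
  apply: continuous_in_subspaceT => u; rewrite inE => Ou; apply: sec_cont; exact: gO.
by apply; exists z.
Qed.

Definition Wt := initial_topology (fun w : C => val w).
Definition pW (w : Wt) : V := (val w).1.

Lemma pW_cont : continuous pW.
Proof.
move=> w; apply: (@continuous_comp _ _ _ (fun w : Wt => val w) fst).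
  exact: initial_continuous.
exact: fst_cont.
Qed.

Lemma Wt_connected : connected [set: Wt].
Proof.
move=> B [b Bb] [D1 [A1 oA1 eA1] eB1] [D2 cD2 eB2].
have [A2 oA2 eA2] : exists2 A2, open A2 & (fun w : C => val w) @^-1` A2 = ~` D2.
  by move: (closed_openC cD2).
have key : C `&` A1 = C `&` ~` A2.
  apply/seteqP; split => w [Cw hw]; split => //.
  - move=> A2w; have : (~` D2) (exist _ w (mem_set Cw) : Wt).
      by rewrite -eA2.
    apply; have : B (exist _ w (mem_set Cw) : Wt).
      by rewrite eB1; split => //; rewrite -eA1.
    by rewrite eB2 => -[].
  - have : B (exist _ w (mem_set Cw) : Wt).
      rewrite eB2; split => //; apply: contrapT => nD; apply: hw.
      by have : (~` D2) (exist _ w (mem_set Cw) : Wt) by []; rewrite -eA2.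
    by rewrite eB1 => -[_]; rewrite -eA1.
have := C_conn (C `&` A1); rewrite {2}key => h.
have e : C `&` A1 = C.
  apply: h.
  - by exists (val b); split; [exact: set_mem (valP b) | have : B b by []; rewrite eB1 -eA1 => -[]].
  - by exists A1.
  - by exists (~` A2) => //; exact: open_closedC.
apply/seteqP; split => // w _; rewrite eB1; split => //; rewrite -eA1 /=.
have hw : C (val w) by exact: set_mem (valP w).
have : (C `&` A1) (val w) by rewrite e.
by case.
Qed.


Lemma sg_comp e1 e2 (x c : R) : sg e1 (sg e2 x + c) = sg (e1 == e2) x + sg e1 c.
Proof. by case: e1; case: e2 => /=; rewrite ?opprD ?opprK. Qed.

Lemma uniq_coef k e c e' c' (N : set V) y : open N -> N y -> U k y ->
  (forall z, N z -> sg e (F k z) + c = sg e' (F k z) + c') -> e = e' /\ c = c'.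
Proof.
move=> oN Ny Uy H.
have [d d0 hd] := chart_nbhs k N y oN Ny Uy.
set a := phi k y.
have h1 := H (chi k a) (hd a _); have h2 := H (chi k (a + d / 2)) (hd (a + d / 2) _).
rewrite /F !phichi in h1 h2.
have lt : Fr k a < Fr k (a + d / 2) by apply: Fr_lt; lra.
have ha : `|a - a| < d by rewrite subrr normr0.
have hb : `|a - (a + d / 2)| < d by rewrite ltr_distlC; apply/andP; split; lra.
move: (h1 ha) (h2 hb) => {h1 h2}; clear H.
by case: e; case: e' => /= h1 h2; split => //; lra.
Qed.

Lemma pW_covering : is_covering pW.
Proof.
split; first exact: pW_cont.
move=> x; have [k Ukx] := cover x.
exists (U k); split => //.
pose G (ec : bool * R) := fun z => sg ec.1 (F k z) + ec.2.
pose P ec := forall z, U k z -> C (z, germ (G ec) z).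
exists {ec : bool * R | P ec}.
exists (fun i => [set w : Wt | U k (pW w) /\ (val w).2 = germ (G (sval i)) (pW w)]).
split.
- move=> i; exists [set w : W0 | U k w.1 /\ w.2 = germ (G (sval i)) w.1] => //.
  exact: sheet_open.
- move=> i j ij; apply/seteqP; split => // w [[Uw ei] [_ ej]]; exfalso; apply: ij.
  have := ei; rewrite ej => /germ_inv [N [oN Ny hN]].
  move: i j hN {ei ej} => [[e c] Pi] [[e' c'] Pj] /= hN.
  have [ee cc] := uniq_coef k e c e' c' N (pW w) oN Ny Uw hN.
  subst e' c'; congr exist; exact: Prop_irrelevance.
- apply/seteqP; split.
    by move=> w [i _ [Uw _]].
  move=> w Uw.
  have := C_valid _ (set_mem (valP w)) => -[h [eh gh]].
  have [j [Ujy [N1 [oN1 N1y N1U [e1 [c1 hc1]]]]]] := gh.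
  have [N2 [oN2 N2y N2U [e2 [c2 hc2]]]] := compat j k (val w).1 Ujy Uw.
  pose i0 := (e1 == e2, sg e1 c2 + c1).
  have ge : germ h (val w).1 = germ (G i0) (val w).1.
    apply: germ_eq; exists (N1 `&` N2); split => //; first exact: openI.
    by move=> z [N1z N2z]; rewrite /G hc1 // hc2 // sg_comp /= addrA.
  have Pi0 : P i0.
    apply: (sheet_in_C _ _ (Uk_connected k)); first by move=> z Uz; exact: good_chart.
    exists (val w).1; split => //; rewrite -ge -eh; case: (val w) (valP w) => a b /=.
    exact: set_mem.
  by exists (exist _ i0 Pi0) => //; split => //; rewrite /pW eh ge.
- move=> i.
  pose w0' : Wt := exist _ w0 (mem_set C_w0).
  pose s := fun z => match pselect (U k z) with
    | left Uz => (exist _ (z, germ (G (sval i)) z) (mem_set (svalP i z Uz)) : Wt)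
    | right _ => w0' end.
  have sE : forall z (Uz : U k z), val (s z) = (z, germ (G (sval i)) z).
    by move=> z Uz; rewrite /s; case: pselect.
  exists s; split; [split|split].
  + by move=> w [].
  + by move=> z Uz; split; rewrite /pW (sE z Uz).
  + move=> w [Uw ew]; apply: val_inj; rewrite (sE _ Uw); move: ew; rewrite /pW.
    by case: (val w) => a b /= ->.
  + by move=> z Uz; rewrite /pW (sE z Uz).
  + exact: continuous_subspaceT pW_cont.
  + rewrite continuous_open_subspace //; move=> z; rewrite inE => Uz.
    move=> B; rewrite nbhsE => -[O [oO Oz] OB].
    move: oO => [A oA eA].
    have Az : A (val (s z)) by have := Oz; rewrite -eA.
    rewrite (sE z Uz) in Az.
    move: oA; rewrite etale_openE => /(_ _ _ Az (G (sval i)) erefl (good_chart k _ z Uz)).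
    move=> [N [oN Nz hN]].
    rewrite nbhsE; exists (N `&` U k); first by split => //; exact: openI.
    move=> z' [Nz' Uz']; apply: OB; rewrite -eA /= (sE z' Uz'); exact: hN.
Qed.


Section Local.
Variables (j : nat) (e : bool) (c : R).
Let H := fun t => sg e (Fr j t) + c.

Lemma H_cont : continuous H.
Proof.
move=> t; rewrite /H; case: e => /=.
  by apply: (@continuousD _ _ _ (Fr j) (fun=> c)); [exact: Fr_cont | exact: cst_continuous].
apply: (@continuousD _ _ _ (fun t => - Fr j t) (fun=> c)); last exact: cst_continuous.
by apply: continuousN; exact: Fr_cont.
Qed.

Lemma Fr_inj : injective (Fr j).
Proof.
move=> s t est; case: (ltgtP s t) => // h.
  by have := Fr_lt j s t h; rewrite est ltxx.
by have := Fr_lt j t s h; rewrite est ltxx.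
Qed.

Lemma H_inj : injective H.
Proof.
move=> s t; rewrite /H => /addIr; case: e => /=; first exact: Fr_inj.
by move/oppr_inj; exact: Fr_inj.
Qed.

Lemma H_mono s t : s < t -> (H s < H t /\ e) \/ (H t < H s /\ ~~ e).
Proof.
move=> st; have := Fr_lt j s t st; rewrite /H; case: e => /= h.
  by left; split => //; lra.
by right; split => //; lra.
Qed.

Lemma minmax_in (p q y : R) : (p < y < q) \/ (q < y < p) -> Num.min p q < y < Num.max p q.
Proof.
case=> /andP[h1 h2]; case: (leP p q) => h; apply/andP; split => //; lra.
Qed.

Lemma H_image l r : l < r ->
  H @` [set t | l < t < r] = [set y | Num.min (H l) (H r) < y < Num.max (H l) (H r)].
Proof.
move=> lr; apply/seteqP; split => y.
  move=> [t /andP[lt tr] <-]; apply: minmax_in => /=.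
  case: (H_mono l t lt) => [[h1 E]|[h1 E]]; case: (H_mono t r tr) => [[h2 E']|[h2 E']].
  - by left; apply/andP.
  - by rewrite E in E'.
  - by rewrite (negbTE E) in E'.
  - by right; apply/andP.
move=> /= /andP[h1 h2].
have [t tin Ht] : exists2 t, t \in `[l, r] & H t = y.
  apply: IVT; first exact: ltW.
    by apply: continuous_subspaceT; exact: H_cont.
  by apply/andP; split; apply: ltW.
move: tin; rewrite in_itv /= => /andP[lt tr].
exists t => //; apply/andP; split; rewrite lt_neqAle ?lt ?tr ?andbT.
  apply/eqP => tl; have Hl : H l = y by rewrite tl.
  by move: h1 h2; rewrite -Hl => h1 h2; exact: (minmax_absurd (H l) (H r) _ _ erefl erefl h1 h2).
apply/eqP => tl; have Hr : H r = y by rewrite -tl.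
by move: h1 h2; rewrite -Hr => h1 h2; exact: (minmax_absurd' (H l) (H r) _ _ erefl erefl h1 h2).
Qed.

Definition Hinv y := xget 0 [set t | H t = y].

Lemma HinvK : cancel H Hinv.
Proof. by move=> t; rewrite /Hinv; apply: xget_unique => // s /H_inj. Qed.

Lemma Hinv_cont t : {for H t, continuous Hinv}.
Proof.
have h1 : {near t, cancel H Hinv} by near=> s; rewrite HinvK.
have h2 : {near t, continuous H} by near=> s; apply: H_cont.
have := @near_can_continuous R H Hinv t h1 h2.
exact: nbhs_singleton.
Unshelve. all: by end_near.
Qed.

Lemma cont_N (N : set V) (f : V -> R) : open N -> N `<=` U j ->
  (forall z, N z -> f z = sg e (F j z) + c) -> forall x, N x -> continuous_at x f.
Proof.
move=> oN NU hf x Nx.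
have gc : {for x, continuous (H \o phi j)}.
  apply: (@continuous_comp _ _ _ (phi j) H); [exact: (cphi_at j x (NU x Nx)) | exact: H_cont].
rewrite /continuous_at (hf x Nx).
apply: cvg_trans gc; apply: near_eq_cvg.
have : nbhs x N by apply: open_nbhs_nbhs.
by apply: filterS => z Nz; rewrite hf.
Qed.

Lemma local_analysis (N : set V) x (f : V -> R) : open N -> N x -> N `<=` U j ->
  (forall z, N z -> f z = sg e (F j z) + c) ->
  continuous_at x f /\
  exists U', [/\ open U', U' x, open (f @` U') & homeo_onto U' (f @` U') f].
Proof.
move=> oN Nx NU hf; split; first exact: (cont_N N f oN NU hf).
have [d d0 hd] := chart_nbhs j N x oN Nx (NU x Nx).
have [a aE] : exists a : R, a = phi j x by exists (phi j x).
have [l lE] : exists l : R, l = a - d / 2 by exists (a - d / 2).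
have [r rE] : exists r : R, r = a + d / 2 by exists (a + d / 2).
have lr : l < r by lra.
pose U' := U j `&` phi j @^-1` [set t | l < t < r].
have oU' : open U'.
  apply: (@continuous_inP _ _ (U j) (phi j) (oU j)).1.
    by move=> z; rewrite inE => Uz; apply: cphi_at.
  exact: itv_open.
have U'x : U' x by split; [exact: NU | rewrite /= -aE; apply/andP; split; lra].
have U'N : U' `<=` N.
  move=> z [Uz /andP[h1 h2]]; rewrite -(chiphi j z Uz); apply: hd.
  by rewrite ltr_distlC; apply/andP; split; rewrite -aE; lra.
have fH : forall z, U' z -> f z = H (phi j z) by move=> z /U'N /hf.
have img : f @` U' = H @` [set t | l < t < r].
  apply/seteqP; split => y.
    by move=> [z U'z <-]; exists (phi j z); [case: U'z | rewrite fH].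
  move=> [t ht <-].
  have hU : U' (chi j t) by split; [exact: Uchi | rewrite /= phichi].
  by exists (chi j t) => //; rewrite fH // phichi.
exists U'; split => //.
  by rewrite img H_image //; exact: itv_open.
exists (fun y => chi j (Hinv y)); split; [split|split].
- by move=> z U'z; exists z.
- by move=> _ [z U'z <-]; rewrite fH // HinvK chiphi //; case: U'z.
- by move=> z U'z; rewrite fH // HinvK chiphi //; case: U'z.
- move=> _ [z U'z <-]; suff -> : chi j (Hinv (f z)) = z by [].
  by rewrite (fH z U'z) HinvK chiphi //; case: U'z.
- apply: continuous_in_subspaceT => z; rewrite inE => U'z.
  exact: (cont_N N f oN NU hf z (U'N z U'z)).
- apply: continuous_in_subspaceT => y; rewrite inE => -[z U'z <-].
  apply: continuous_comp; last exact: cchi.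
  rewrite fH //; exact: Hinv_cont.
Qed.

End Local.


Definition ev (w : W0) : R := xget 0 [set r | exists2 h, w.2 h & h w.1 = r].

Lemma ev_germ g y : ev (y, germ g y) = g y.
Proof.
rewrite /ev; apply: xget_unique; first by exists g => //; exact: germ_refl.
by move=> r [h [N [oN Ny hN]] <-] /=; rewrite hN.
Qed.

Hypothesis SC : forall (W : topologicalType) (p : W -> V),
  connected_space W -> is_covering p -> homeo_onto [set: W] [set: V] p.

Theorem main_exists : exists f : V -> R, continuous f /\ local_homeo f.
Proof.
have cW : connected_space Wt.
  split; last exact: Wt_connected.
  by exists (exist _ w0 (mem_set C_w0) : Wt).
have [q [[_ _ _ pq] [_ cq]]] := SC Wt pW cW pW_covering.
have {}cq : continuous q by apply/continuous_subspace_setT.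
pose f := fun x => ev (val (q x)).
have key : forall x, exists j e c N, [/\ open N, N x, N `<=` U j &
    forall z, N z -> f z = sg e (F j z) + c].
  move=> x.
  have px := pq x I; rewrite /pW in px.
  case Eq: (q x) px => [[a b] Cab] /= ax; subst a.
  have := C_valid _ (set_mem Cab) => -[h [/= eh gh]].
  have [j [Ujx [N1 [oN1 N1x N1U [e [c hc]]]]]] := gh.
  pose O := [set w : W0 | N1 w.1 /\ w.2 = germ h w.1].
  have oO : open O by exact: sheet_open.
  have cvq : continuous (fun x => val (q x) : W0).
    move=> y; apply: (@continuous_comp _ _ _ q (fun w : Wt => val w)); first exact: cq.
    exact: initial_continuous.
  have oQ := (continuousP _).1 cvq O oO.
  exists j, e, c, ((fun x => val (q x) : W0) @^-1` O); split => //.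
  - by rewrite /= Eq /=.
  - by move=> z [+ _]; have := pq z I; rewrite /pW => ->; exact: N1U.
  - move=> z [+ +]; have := pq z I; rewrite /pW => -> N1z ez.
    rewrite /f; have -> : val (q z) = (z, germ h z).
      by have := pq z I; rewrite /pW; case: (val (q z)) ez => a0 b0 /= -> ->.
    by rewrite ev_germ hc.
exists f; split.
  move=> x; have [j [e [c [N [oN Nx NU hf]]]]] := key x.
  exact: (local_analysis j e c N x f oN Nx NU hf).1.
move=> x; have [j [e [c [N [oN Nx NU hf]]]]] := key x.
have [U' [oU' U'x oimg hom]] := (local_analysis j e c N x f oN Nx NU hf).2.
by exists U'; split.
Qed.

End Main.

From HB Require Import structures.
From mathcomp Require Import all_boot all_order all_algebra.
From mathcomp Require Import all_classical all_reals topology normedtype realfun.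
From mathcomp Require Import lra.
Set Implicit Arguments. Unset Strict Implicit. Unset Printing Implicit Defensive.
Import Order.TTheory GRing.Theory Num.Theory.
Import numFieldNormedType.Exports.
Local Open Scope classical_set_scope.
Local Open Scope ring_scope.

Definition is_chart {R : realType} {V : topologicalType} (c : set V * (V -> R) * (R -> V)) :=
  [/\ open c.1.1, (forall t, c.1.1 (c.2 t)), (forall t, c.1.2 (c.2 t) = t),
      (forall x, c.1.1 x -> c.2 (c.1.2 x) = x) &
      ({within c.1.1, continuous c.1.2} /\ continuous c.2)].

Lemma chart_at (R : realType) (V : topologicalType) : manifold1 R V ->
  forall x : V, exists c : set V * (V -> R) * (R -> V), is_chart c /\ c.1.1 x.
Proof.
move=> M x; have [U [oU Ux [phi [g [[_ hg gphi phig] [cphi cg]]]]]] := M x.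
exists (U, phi, g); split => //; split => //=.
- by move=> t; apply: hg.
- by move=> t; apply: phig.
- by split => //; apply/continuous_subspace_setT.
Qed.

Lemma atlas_exists (R : realType) (V : topologicalType) : manifold1 R V ->
  @second_countable V -> V ->
  exists A : nat -> set V * (V -> R) * (R -> V),
    (forall n, is_chart (A n)) /\ (forall x, exists n, (A n).1.1 x).
Proof.
move=> M [B cB [BO Bnb]] v0.
have [f finj] := countable_injP _ cB.
have [c0 [hc0 _]] := chart_at M v0.
pose P n := fun c : set V * (V -> R) * (R -> V) =>
  is_chart c /\ exists b, [/\ B b, f b = n & b `<=` c.1.1].
pose A n := match pselect (exists c, P n c) with
  | left h => proj1_sig (cid h) | right _ => c0 end.
have AP : forall n, (exists c, P n c) -> P n (A n).
  by move=> n h; rewrite /A; case: pselect => // h'; exact: (proj2_sig (cid h')).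
exists A; split.
  move=> n; rewrite /A; case: pselect => // h; exact: (proj2_sig (cid h)).1.
move=> x; have [c [hc cx]] := chart_at M x.
have : nbhs x c.1.1 by apply: open_nbhs_nbhs; split => //; case: hc.
move/(Bnb x) => [b [Bb bx] bc].
exists (f b).
have [_ [b' [Bb' fb' b'A]]] := AP (f b) (ex_intro _ c (conj hc (ex_intro _ b (And3 Bb erefl bc)))).
have bb : b' = b by apply: finj => //; rewrite inE.
by apply: b'A; rewrite bb.
Qed.

From HB Require Import structures.
From mathcomp Require Import all_boot all_order all_algebra.
From mathcomp Require Import all_classical all_reals topology normedtype realfun.
From mathcomp Require Import all_analysis measurable_realfun.
From mathcomp Require Import ring lra.
Set Implicit Arguments. Unset Strict Implicit. Unset Printing Implicit Defensive.
Import Order.TTheory GRing.Theory Num.Theory.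
Import numFieldNormedType.Exports.
Local Open Scope classical_set_scope.
Local Open Scope ring_scope.

Section HG.
Variable R : realType.
Definition hh (t : R) := t / (1 + `|t|).
Definition gg (v : R) := v / (1 - `|v|).

Lemma hh_norm t : `|hh t| = `|t| / (1 + `|t|).
Proof.
by rewrite /hh normrM normfV (ger0_norm (_ : 0 <= 1 + `|t|)) //; apply: addr_ge0.
Qed.

Lemma hh_lt1 t : `|hh t| < 1.
Proof.
rewrite hh_norm ltr_pdivrMr; last by apply: ltr_pwDl.
by rewrite mul1r ltrDr.
Qed.

Lemma gg_hh t : gg (hh t) = t.
Proof.
rewrite /gg hh_norm /hh.
have h0 : 0 < 1 + `|t| by apply: ltr_pwDl.
field; apply/andP; split; first by rewrite gt_eqF.
by rewrite addrK oner_eq0.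
Qed.

Lemma gg_norm v : `|v| < 1 -> `|gg v| = `|v| / (1 - `|v|).
Proof.
move=> v1; rewrite /gg normrM normfV (ger0_norm (_ : 0 <= 1 - `|v|)) //.
by rewrite subr_ge0 ltW.
Qed.

Lemma hh_gg v : `|v| < 1 -> hh (gg v) = v.
Proof.
move=> v1; rewrite /hh gg_norm // /gg.
have h0 : 0 < 1 - `|v| by rewrite subr_gt0.
field; apply/andP; split; first by rewrite gt_eqF.
by rewrite subrK oner_eq0.
Qed.

Lemma gg_cont v : `|v| < 1 -> {for v, continuous gg}.
Proof.
move=> v1; apply: (@continuousM _ _ id (fun v => (1 - `|v|)^-1)).
  by move=> ?.
apply: (@continuousV _ _ (fun v => 1 - `|v|)).
  by rewrite subr_eq0 eq_sym lt_eqF.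
apply: continuousB; first exact: cst_continuous.
exact: norm_continuous.
Qed.

End HG.

Section Itv.
Variable R : realType.
Definition ll (n : nat) : R := (n.+2%:R)^-1.
Definition rr (n : nat) : R := (n.+1%:R)^-1.
Definition Iv n := [set u : R | ll n < u < rr n].
Definition cc n (t : R) := ((rr n - ll n) * hh t + ll n + rr n) / 2.
Definition aa n (u : R) := (2 * u - ll n - rr n) / (rr n - ll n).
Definition bb n (u : R) := gg (aa n u).

Lemma ll_gt0 n : 0 < ll n.
Proof. by rewrite /ll invr_gt0 ltr0n. Qed.

Lemma ll_lt_rr n : ll n < rr n.
Proof. by rewrite /ll /rr ltf_pV2 ?posrE ?ltr0n // ltr_nat. Qed.

Lemma rr_le1 n : rr n <= 1.
Proof. by rewrite /rr invr_le1 ?ler1n ?unitfE ?pnatr_eq0 // ltr0n. Qed.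

Lemma Iv_disj n n' u : Iv n u -> Iv n' u -> n = n'.
Proof.
wlog lt : n n' / (n < n')%N.
  move=> H h1 h2; case: (ltngtP n n') => h; first exact: H.
    by apply/esym; apply: H.
  by [].
move=> /andP[h1 h2] /andP[h3 h4]; exfalso.
have : rr n' <= ll n.
  by rewrite /ll /rr lef_pV2 ?posrE ?ltr0n // ler_nat.
lra.
Qed.

Lemma cc_in n t : Iv n (cc n t).
Proof.
have h := hh_lt1 t; move: h; rewrite ltr_norml => /andP[h1 h2].
have d0 : 0 < rr n - ll n by rewrite subr_gt0 ll_lt_rr.
rewrite /Iv /cc /=; apply/andP; split; nra.
Qed.

Lemma aa_cc n t : aa n (cc n t) = hh t.
Proof.
have d0 : rr n - ll n != 0 by rewrite subr_eq0 gt_eqF // ll_lt_rr.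
by rewrite /aa /cc; field.
Qed.

Lemma bb_cc n t : bb n (cc n t) = t.
Proof. by rewrite /bb aa_cc gg_hh. Qed.

Lemma aa_lt1 n u : Iv n u -> `|aa n u| < 1.
Proof.
move=> /andP[h1 h2]; have d0 : 0 < rr n - ll n by rewrite subr_gt0 ll_lt_rr.
rewrite ltr_norml /aa; apply/andP; split.
  by rewrite ltr_pdivlMr //; lra.
by rewrite ltr_pdivrMr //; lra.
Qed.

Lemma cc_bb n u : Iv n u -> cc n (bb n u) = u.
Proof.
move=> Iu; rewrite /cc /bb hh_gg ?aa_lt1 //.
have d0 : rr n - ll n != 0 by rewrite subr_eq0 gt_eqF // ll_lt_rr.
by rewrite /aa; field.
Qed.

Lemma bb_cont n u : Iv n u -> {for u, continuous (bb n)}.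
Proof.
move=> Iu; suff : {for u, continuous (@gg R \o aa n)} by [].
apply: continuous_comp; last exact: gg_cont (aa_lt1 Iu).
rewrite /aa.
have -> : (fun u0 : R => (2 * u0 - ll n - rr n) / (rr n - ll n)) =
  (fun u0 => 2 * u0 - ll n - rr n) \* (fun=> (rr n - ll n)^-1) by [].
apply: continuousM; last exact: cst_continuous.
have -> : (fun u0 : R => 2 * u0 - ll n - rr n) =
  ((fun=> 2) \* id) - (fun=> ll n) - (fun=> rr n) by [].
apply: continuousB; last exact: cst_continuous.
apply: continuousB; last exact: cst_continuous.
apply: continuousM; first exact: cst_continuous.
by move=> ?.
Qed.

End Itv.

Unset Implicit Arguments.
Section Meas.
Variables (R : realType) (V : topologicalType).
Variables (U : nat -> set V) (phi : nat -> V -> R) (chi : nat -> R -> V).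
Hypothesis oU : forall k, open (U k).
Hypothesis Uchi : forall k t, U k (chi k t).
Hypothesis phichi : forall k t, phi k (chi k t) = t.
Hypothesis chiphi : forall k x, U k x -> chi k (phi k x) = x.
Hypothesis cphi : forall k, {within U k, continuous (phi k)}.
Hypothesis cchi : forall k, continuous (chi k).
Hypothesis cover : forall x, exists k, U k x.

Definition Theta n u := chi n (bb n u).
Definition Psi (A : set V) : set R := \bigcup_n [set u | Iv n u /\ A (Theta n u)].
Let mu := @lebesgue_measure R.

Lemma Iv_open n : open (@Iv R n).
Proof. exact: itv_open. Qed.

Lemma Psi_open A : open A -> open (Psi A).
Proof.
move=> oA; apply: bigcup_open => n _.
have := (@continuous_inP _ _ (@Iv R n) (Theta n) (Iv_open n)).1; apply => //.
move=> u; rewrite inE => Iu; apply: (@continuous_comp _ _ _ (bb n) (chi n)).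
  exact: bb_cont.
exact: cchi.
Qed.

Lemma Psi_U A B : Psi (A `|` B) = Psi A `|` Psi B.
Proof.
apply/seteqP; split => u.
  by move=> [n _ [Iu [h|h]]]; [left|right]; exists n.
by move=> [[n _ [Iu h]]|[n _ [Iu h]]]; exists n => //; split => //; [left|right].
Qed.

Lemma Psi_disj A B : A `&` B = set0 -> Psi A `&` Psi B = set0.
Proof.
move=> AB; apply/seteqP; split => // u [[n _ [Iu Au]] [n' _ [Iu' Bu]]].
have nn := Iv_disj Iu Iu'; subst n'.
by have : (A `&` B) (Theta n u) by []; rewrite AB.
Qed.

Lemma Psi_sub A : Psi A `<=` [set` `]0, 1[%R].
Proof.
move=> u [n _ [/andP[h1 h2] _]]; rewrite /= in_itv /=; apply/andP; split.
  exact: lt_trans (ll_gt0 R n) h1.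
exact: lt_le_trans h2 (rr_le1 R n).
Qed.

Lemma Psi_fin A : measurable (Psi A) -> (mu (Psi A) < +oo)%E.
Proof.
move=> mA; apply: (@le_lt_trans _ _ (mu [set` `]0%R, 1%R[])).
  apply: (@le_measure _ _ _ mu (Psi A) [set` `]0%R, 1%R[]).
  - by rewrite inE.
  - by rewrite inE; exact: measurable_itv.
  - exact: Psi_sub.
by rewrite /mu lebesgue_measure_itv /= lte01 /= ltry.
Qed.

Lemma Psi_pt p : mu (Psi [set p]) = 0%E.
Proof.
apply: countable_lebesgue_measure0.
apply: (@sub_countable _ _ _ (range (fun n => cc n (phi n p)))).
  apply: subset_card_le => u [n _ [Iu /= pe]].
  exists n => //; rewrite -pe /Theta phichi cc_bb //.
apply: card_le_trans (card_image_le _ _) _.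
exact: countableP.
Qed.

Lemma Psi_pt_meas p : measurable (Psi [set p]).
Proof.
apply: countable_measurable; first exact: measurable_set1.
apply: (@sub_countable _ _ _ (range (fun n => cc n (phi n p)))).
  apply: subset_card_le => u [n _ [Iu /= pe]].
  exists n => //; rewrite -pe /Theta phichi cc_bb //.
apply: card_le_trans (card_image_le _ _) _.
exact: countableP.
Qed.

Lemma Psi_pos A z : open A -> A z -> (0 < mu (Psi A))%E.
Proof.
move=> oA Az; have [n Uz] := cover z.
set u := cc n (phi n z).
have Pu : Psi A u.
  exists n => //; split; first exact: cc_in.
  by rewrite /Theta /u bb_cc chiphi.
have : nbhs u (Psi A) by apply: open_nbhs_nbhs; split => //; exact: Psi_open.
move/nbhs_ballP => [r r0 hr].
apply: (@lt_le_trans _ _ (mu (ball u r))).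
  by rewrite /mu lebesgue_measure_ball ?ltW // lte_fin mulrn_wgt0.
apply: (@le_measure _ _ _ mu (ball u r) (Psi A)) => //.
  by rewrite inE; apply: open_measurable; exact: ball_open.
by rewrite inE; exact: open_measurable (Psi_open A oA).
Qed.


Definition m (A : set V) : R := fine (mu (Psi A)).
Definition L k t := [set z | U k z /\ phi k z < t].
Definition Jm k s t := [set z | U k z /\ s < phi k z < t].
Definition Fr k t := m (L k t).

Lemma open_pre k (X : set R) : open X -> open (U k `&` phi k @^-1` X).
Proof.
move=> oX; apply: (@continuous_inP _ _ (U k) (phi k) (oU k)).1 => //.
move=> x; rewrite inE => Ux; have := cphi k; rewrite continuous_open_subspace //.
by apply; rewrite inE.
Qed.

Lemma L_open k t : open (L k t).
Proof. exact: (open_pre k [set x | x < t] (@open_lt R t)). Qed.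

Lemma Jm_open k s t : open (Jm k s t).
Proof. exact: (open_pre k [set x | s < x < t] (itv_open _ _)). Qed.

Lemma Psi_meas A : open A -> measurable (Psi A).
Proof. by move=> oA; apply: open_measurable; exact: Psi_open. Qed.

Lemma Psi_finnum A : measurable (Psi A) -> mu (Psi A) \is a fin_num.
Proof. by move=> mA; rewrite ge0_fin_numE ?measure_ge0 //; exact: Psi_fin. Qed.

Lemma Psi_mono A B : A `<=` B -> Psi A `<=` Psi B.
Proof. by move=> AB u [n _ [Iu Au]]; exists n => //; split => //; apply: AB. Qed.

Lemma m_le A B : open A -> open B -> A `<=` B -> m A <= m B.
Proof.
move=> oA oB AB; apply: fine_le; rewrite ?inE; try exact: Psi_finnum (Psi_meas _ _).
apply: (@le_measure _ _ _ mu (Psi A) (Psi B)); rewrite ?inE; try exact: Psi_meas.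
exact: Psi_mono.
Qed.

Lemma L_split k s t : s < t -> L k t = (L k s `|` [set chi k s]) `|` Jm k s t.
Proof.
move=> st; apply/seteqP; split => z.
  move=> [Uz zt]; case: (ltgtP (phi k z) s) => h.
  - by left; left.
  - by right; split => //; apply/andP.
  - by left; right; rewrite /= -h chiphi.
case=> [[[Uz zs]|->]|[Uz /andP[_ zt]]].
- by split => //; exact: lt_trans zs st.
- by split; rewrite ?phichi.
- by [].
Qed.

Lemma Fr_J k s t : s < t -> Fr k t - Fr k s = m (Jm k s t).
Proof.
move=> st; rewrite /Fr /m (L_split k s t st).
have mLs := Psi_meas _ (L_open k s).
have mJ := Psi_meas _ (Jm_open k s t).
have mp := Psi_pt_meas (chi k s).
have d1 : (L k s `|` [set chi k s]) `&` Jm k s t = set0.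
  apply/seteqP; split => // z [[[_ zs]|->] [_ /andP[sz _]]].
  - by move: (lt_trans zs sz); rewrite ltxx.
  - by move: sz; rewrite phichi ltxx.
have d2 : L k s `&` [set chi k s] = set0.
  by apply/seteqP; split => // z [[_ zs] zE]; move: zs; rewrite zE phichi ltxx.
have e1 : mu (Psi ((L k s `|` [set chi k s]) `|` Jm k s t)) =
    (mu (Psi (L k s `|` [set chi k s])) + mu (Psi (Jm k s t)))%E.
  rewrite Psi_U; apply: (@measureU _ _ _ (@lebesgue_measure R)) => //.
    by rewrite Psi_U; exact: measurableU.
  exact: Psi_disj.
have e2 : mu (Psi (L k s `|` [set chi k s])) = mu (Psi (L k s)).
  rewrite Psi_U.
  apply: (eq_trans (@measureU _ _ _ (@lebesgue_measure R) _ _ mLs mp (Psi_disj _ _ d2))).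
  rewrite -[RHS]adde0; congr (_ + _)%E; exact: Psi_pt.
rewrite e1 e2 fineD ?Psi_finnum //.
by rewrite addrC addKr.
Qed.

Lemma Fr_lt k s t : s < t -> Fr k s < Fr k t.
Proof.
move=> st; rewrite -subr_gt0 Fr_J //; apply: fine_gt0; apply/andP; split.
  apply: (Psi_pos _ (chi k ((s + t) / 2)) (Jm_open k s t)).
  by split => //; rewrite phichi; apply/andP; split; lra.
exact: Psi_fin (Psi_meas _ (Jm_open k s t)).
Qed.


Lemma Psi_pt_count p : countable (Psi [set p]).
Proof.
apply: (@sub_countable _ _ _ (range (fun n => cc n (phi n p)))).
  apply: subset_card_le => u [n _ [Iu /= pe]].
  exists n => //; rewrite -pe /Theta phichi cc_bb //.
apply: card_le_trans (card_image_le _ _) _.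
exact: countableP.
Qed.

Lemma small_eq0 (x : R) : (forall n : nat, `|x| < (n.+1%:R)^-1) -> x = 0.
Proof.
move=> h; apply/eqP; apply: contraT => x0.
have ax : 0 < `|x| by rewrite normr_gt0.
have hi : 0 < `|x|^-1 by rewrite invr_gt0.
have := archi_boundP (ltW hi).
set n := Num.bound _ => hn.
suff : (n.+1%:R : R)^-1 <= `|x| by rewrite leNgt h.
rewrite -(invrK `|x|) lef_pV2 ?posrE ?invr_gt0 ?ltr0n //.
by rewrite (le_trans (ltW hn)) // ler_nat.
Qed.

Lemma Fr_cont k : continuous (Fr k).
Proof.
move=> t.
pose D n := Jm k (t - (n.+1%:R)^-1) (t + (n.+1%:R)^-1).
pose F n := Psi (D n).
have mF : forall n, measurable (F n) by move=> n; exact: Psi_meas _ (Jm_open _ _ _).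
have Fdec : {homo F : n m / (n <= m)%N >-> (m <= n)%O}.
  move=> n n' nn'; apply/asboolP; apply: Psi_mono => z [Uz /andP[h1 h2]].
  have le : (n'.+1%:R)^-1 <= (n.+1%:R : R)^-1.
    by rewrite lef_pV2 ?posrE ?ltr0n // ler_nat.
  split => //; apply/andP; split.
    by apply: le_lt_trans h1; rewrite lerD2l lerN2.
  by apply: lt_le_trans h2 _; rewrite lerD2l.
have cv := @nonincreasing_cvg_mu _ _ _ (@lebesgue_measure R) F
  (Psi_fin _ (mF 0%N)) mF (bigcapT_measurable mF) Fdec.
have z0 : mu (\bigcap_n F n) = 0%E.
  apply: countable_lebesgue_measure0.
  apply: (@sub_countable _ _ _ (Psi [set chi k t])); last exact: Psi_pt_count.
  apply: subset_card_le => u Fu.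
  have [M _ [IM DM]] := Fu 0%N I.
  have hn : forall n, D n (Theta M u).
    by move=> n; have [M' _ [IM' DM']] := Fu n I; rewrite (Iv_disj IM IM').
  exists M => //; split => //=.
  have [Uz _] := hn 0%N.
  rewrite -(chiphi k _ Uz); congr (chi k _).
  apply/eqP; rewrite -subr_eq0; apply/eqP; apply: small_eq0 => n.
  have [_ /andP[h1 h2]] := hn n; by rewrite distrC ltr_distlC h1 h2.
have cv0 : (fun n => mu (F n)) x @[x --> \oo] --> 0%E by rewrite -z0; exact: cv.
move: cv0 => /fine_cvgP [_ cvf].
apply/cvgrPdist_lt => e e0.
have := (cvgrPdist_lt _ _).1 cvf e e0.
case=> N _ HN.
have HNN := HN N (leqnn N).
have mD : m (D N) < e.
  move: HNN; rewrite /= sub0r normrN => h; exact: le_lt_trans (ler_norm _) h.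
apply/nbhs_ballP; exists (N.+1%:R^-1); first by rewrite /= invr_gt0 ltr0n.
move=> s; rewrite /ball /= ltr_distlC => /andP[h1 h2].
case: (ltgtP s t) => st.
- rewrite ger0_norm; last by rewrite subr_ge0 ltW // Fr_lt.
  rewrite Fr_J //; apply: le_lt_trans mD; apply: m_le; try exact: Jm_open.
  move=> z [Uz /andP[z1 z2]]; split => //; apply/andP; split.
    exact: lt_trans h1 z1.
  by apply: lt_trans z2 _; rewrite ltrDl invr_gt0 ltr0n.
- rewrite ltr0_norm; last by rewrite subr_lt0 Fr_lt.
  rewrite opprB Fr_J //; apply: le_lt_trans mD; apply: m_le; try exact: Jm_open.
  move=> z [Uz /andP[z1 z2]]; split => //; apply/andP; split.
    by apply: lt_trans z1; rewrite gtrDl oppr_lt0 invr_gt0 ltr0n.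
  exact: lt_trans z2 h2.
- by rewrite st subrr normr0.
Qed.

End Meas.

From HB Require Import structures.
From mathcomp Require Import all_boot all_order all_algebra.
From mathcomp Require Import all_classical all_reals topology normedtype realfun.
Import numFieldNormedType.Exports.
Local Open Scope classical_set_scope.

Theorem proposition2 (R : realType) (V : topologicalType) :
  manifold1 R V -> simply_connected V -> @second_countable V ->
  exists f : V -> R, continuous f /\ local_homeo f.
Proof.
move=> M [[[v0 _] _] SC] SCnt.
have [A [hA cov]] := atlas_exists M SCnt v0.
pose U := fun n => (A n).1.1.
pose phi := fun n => (A n).1.2.
pose chi := fun n => (A n).2.
have oU : forall k, open (U k) by move=> k; case: (hA k).
have Uchi : forall k t, U k (chi k t) by move=> k; case: (hA k).
have phichi : forall k t, phi k (chi k t) = t by move=> k; case: (hA k).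
have chiphi : forall k x, U k x -> chi k (phi k x) = x by move=> k; case: (hA k).
have cphi : forall k, {within U k, continuous (phi k)} by move=> k; case: (hA k) => _ _ _ _ [].
have cchi : forall k, continuous (chi k) by move=> k; case: (hA k) => _ _ _ _ [].
exact: (main_exists R V U phi chi oU Uchi phichi chiphi cphi cchi
  (m R V chi) (Fr R V U phi chi)
  (Fr_cont R V U phi chi oU Uchi phichi chiphi cphi cchi cov)
  (Fr_lt R V U phi chi oU Uchi phichi chiphi cphi cchi cov)
  (Fr_J R V U phi chi oU Uchi phichi chiphi cphi cchi)
  cov v0 SC).
Qed.
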